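(* Assume the rearrangement setting described in the context, with $R$ a poset. Assume moreover that: - $\beta$ is a bijection $X\to Y$ which is a homomorphism from $R|_X$ to $R|_Y$; - for every $x\in X$, $N^{in}_R(x)\setminus M\subseteq N^{in}_R(\beta(x))$ and $N^{out}_R(x)\setminus M\subseteq N^{out}_R(\beta(x))$; - $X$ is convex in $R$; - there is no walk in $R$ from $M$ to $Y$ and no walk in $R$ from $Y$ to $M$. Let $T$ be the transitive hull of $S$. Then $T$ is a poset and $R\sqsubseteq_\Gamma T$ with respect to $\mathfrak{D}$.
   Context: **Digraphs and homomorphisms.** - A digraph $G$ is a pair $(V(G),A(G))$, where $V(G)$ is a finite non-empty set and $A(G)\subseteq V(G)\times V(G)$. Arcs are written $vw$. - A poset is a reflexive, antisymmetric, transitive digraph. - A homomorphism $\xi:G\to H$ is a map $V(G)\to V(H)$ with $\xi(v)\xi(w)\in A(H)$ for all $vw\in A(G)$. $\mathcal{H}(G,H)$ is the set of homomorphisms. - Two vertices $u,w$ are adjacent if $uw\in A(G)$ or $wu\in A(G)$. - $N_G(v)$ is the set of $w\ne v$ adjacent to $v$. $N^{in}_G(v)=\{w\in N_G(v):wv\in A(G)\}$ and $N^{out}_G(v)=\{w\in N_G(v):vw\in A(G)\}$. - $G|_X$ is the induced subdigraph on $X$. - A walk is a sequence $v_0,\dots,v_I$ with $I\ge1$ and $v_{i-1}v_i\in A(G)$. A walk from $A$ to $B$ is one with $v_0\in A$ and $v_I\in B$. - A set $X$ is convex if every walk starting and ending in $X$ has all its vertices in $X$. - The transitive hull of $G$ is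 the digraph on $V(G)$ whose arc set is the smallest transitive relation containing $A(G)$. - $\mathfrak{D}$ is the class of all digraphs. **Rearrangement setting.** - $R=(Z,A(R))$ is a digraph. - $X,M\subseteq Z$ are disjoint. - $Y\subseteq Z$ satisfies $M\cap Y=\emptyset$ and $M\cap N_R(y)=\emptyset$ for all $y\in Y$. - $\beta:X\to Y$ is a map. - $S$ is the digraph with $V(S)=Z$ and $A(S)=A_r\cup A_d\cup A_u$, where: - $A_r=A(R)\setminus((M\times X)\cup(X\times M))$; - $A_d=\{m\beta(x): mx\in A(R)\cap(M\times X)\}$; - $A_u=\{\beta(x)m: xm\in A(R)\cap(X\times M)\}$. **Connectivity and schemes.** - For $X'\subseteq V(G)$ and $v,w\in X'$, the vertices $v$ and $w$ are connected in $X'$ if $v=w$, or if there are $z_0=v,\dots,z_I=w$ in $X'$ with consecutive terms adjacent. - $\gamma_{X'}(v)$ is the set of such $w$. - $\Gamma_\xi(v)=\gamma_{\xi^{-1}(\xi(v))}(v)$. - $\mathfrak{D}_r$ is a fixed system of representatives of $\mathfrak{D}$ up to isomorphism. - $R\sqsubseteq_\Gamma T$ with respect to $\mathfrak{D}$ means there exist injective maps $\rho_G:\mathcal{H}(G,R)\to\mathcal{H}(G,T)$, $G\in\mathfrak{D}_r$, with $\Gamma_{\rho_G(\xi)}(v)=\Gamma_\xi(v)$ for all $G$, $\xi$ and $v$. *)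

(* Defs.v *)
From mathcomp Require Import ssreflect ssrfun ssrbool eqtype ssrnat seq path choice fintype finfun finset fingraph.
Set Implicit Arguments. Unset Strict Implicit. Unset Printing Implicit Defensive.

Section Digraphs.
Variable V : finType.
Implicit Types (e : rel V) (A : {set V}) (v w : V).

Definition is_poset e : Prop :=
  [/\ reflexive e, antisymmetric e & transitive e].

Definition Nin e v : {set V} := [set w | (w != v) && e w v].
Definition Nout e v : {set V} := [set w | (w != v) && e v w].
Definition Nbhd e v : {set V} := Nin e v :|: Nout e v.

(* a walk v0, v1, ..., vI (I >= 1) is  v0 :: s  with s non-empty *)
Definition is_walk e v0 (s : seq V) : bool := (s != [::]) && path e v0 s.

Definition walk_from_to e A (B : {set V}) : Prop :=
  exists v0 s, [/\ is_walk e v0 s, v0 \in A & last v0 s \in B].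

Definition convex e A : Prop :=
  forall v0 s, is_walk e v0 s -> v0 \in A -> last v0 s \in A ->
    all (fun u => u \in A) (v0 :: s).

(* transitive hull: smallest transitive relation containing e *)
Definition trans_hull e : rel V :=
  fun a b => [exists z, e a z && connect e z b].

Definition adjacent e v w : bool := e v w || e w v.
Definition gamma e (X' : {set V}) v : {set V} :=
  [set w | connect [rel a b | [&& a \in X', b \in X' & adjacent e a b]] v w].
End Digraphs.

Definition is_hom (V W : finType) (eG : rel V) (eH : rel W) (f : V -> W) : Prop :=
  forall v w, eG v w -> eH (f v) (f w).

Definition Gamma (V W : finType) (eG : rel V) (xi : {ffun V -> W}) (v : V) : {set V} :=
  gamma eG [set u | xi u == xi v] v.

(* R ⊑_Γ T w.r.t. the class of all (finite, non-empty) digraphs *)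
Definition sqsubGamma (Z : finType) (eR eT : rel Z) : Prop :=
  forall (V : finType) (eG : rel V), 0 < #|V| ->
    exists rho : {ffun V -> Z} -> {ffun V -> Z},
      [/\ forall xi : {ffun V -> Z}, is_hom eG eR xi -> is_hom eG eT (rho xi),
          forall xi1 xi2 : {ffun V -> Z}, is_hom eG eR xi1 -> is_hom eG eR xi2 ->
             rho xi1 = rho xi2 -> xi1 = xi2
        & forall (xi : {ffun V -> Z}) v, is_hom eG eR xi -> Gamma eG (rho xi) v = Gamma eG xi v].

Definition rearr (Z : finType) (eR : rel Z) (X M : {set Z}) (beta : Z -> Z) : rel Z :=
  fun a b =>
    [|| eR a b && ~~ (((a \in M) && (b \in X)) || ((a \in X) && (b \in M))),
        (a \in M) && [exists x in X, eR a x && (b == beta x)]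
      | (b \in M) && [exists x in X, eR x b && (a == beta x)]].

(* Main.v *)
Require Import Defs.
From mathcomp Require Import ssreflect ssrfun ssrbool eqtype ssrnat seq path choice fintype finfun finset fingraph.

Lemma inv_cycle (T : finType) (e : rel T) (P : T -> Prop) :
  (forall c d, P c -> e c d -> connect e d c -> P d) ->
  forall a b, P a -> connect e a b -> connect e b a -> P b.
Proof.
move=> step a b Pa /connectP [p pth ->]; elim: p a Pa pth => [|q p IH] a Pa //=.
move=> /andP[eaq pth] back; apply: (IH q) => //.
  apply: (step a) => //; apply: connect_trans back.
  by apply/connectP; exists p.
by apply: connect_trans back (connect1 eaq).
Qed.

Lemma gamma_sub (V W : finType) (e : rel V) (f g : V -> W) v :
  (forall a b, adjacent e a b -> (f a == f b) = (g a == g b)) ->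
  gamma e [set u | f u == f v] v \subset gamma e [set u | g u == g v] v.
Proof.
move=> H; apply/subsetP => w; rewrite !inE => /connectP [p pth ->].
apply/connectP; exists p => //.
have: forall a, f a = f v -> g a = g v ->
  path [rel a b | [&& a \in [set u | f u == f v], b \in [set u | f u == f v] & adjacent e a b]] a p ->
  path [rel a b | [&& a \in [set u | g u == g v], b \in [set u | g u == g v] & adjacent e a b]] a p.
  elim: p {pth} => //= q p IH a fa ga /andP[r1 pth].
  move: r1; rewrite !inE => /and3P[_ /eqP fq adj].
  have gq : g q = g a by apply/eqP; rewrite eq_sym -H // fa fq.
  rewrite ga eqxx /= gq ga eqxx adj /=.
  by apply: IH => //; rewrite gq.
by apply.
Qed.

Lemma gamma_eq (V W : finType) (e : rel V) (f g : V -> W) v :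
  (forall a b, adjacent e a b -> (f a == f b) = (g a == g b)) ->
  gamma e [set u | f u == f v] v = gamma e [set u | g u == g v] v.
Proof.
move=> H; apply/eqP; rewrite eqEsubset !gamma_sub //.
by move=> a b ab; rewrite H.
Qed.

Theorem corollary7 (Z : finType) (eR : rel Z) (X M Y : {set Z}) (beta : Z -> Z) :
  0 < #|Z| ->
  is_poset eR ->
  [disjoint X & M] ->
  [disjoint M & Y] ->
  (forall y, y \in Y -> [disjoint M & Nbhd eR y]) ->
  (* beta : X -> Y is a bijection *)
  {in X, forall x, beta x \in Y} ->
  {in X &, injective beta} ->
  (forall y, y \in Y -> exists2 x, x \in X & beta x = y) ->
  (* beta is a homomorphism R|_X -> R|_Y *)
  {in X &, forall x x', eR x x' -> eR (beta x) (beta x')} ->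
  (forall x, x \in X -> Nin eR x :\: M \subset Nin eR (beta x)) ->
  (forall x, x \in X -> Nout eR x :\: M \subset Nout eR (beta x)) ->
  convex eR X ->
  ~ walk_from_to eR M Y ->
  ~ walk_from_to eR Y M ->
  is_poset (trans_hull (rearr eR X M beta)) /\
  sqsubGamma eR (trans_hull (rearr eR X M beta)).
Proof.
move=> _ [Rrefl Ranti Rtr] dXM dMY _ bY binj _ bhom hNin hNout cvx noMYw noYMw.
set S := rearr eR X M beta.
have nXM : forall z, z \in X -> z \in M = false by move=> z; apply: disjointFr.
have nYM : forall z, z \in Y -> z \in M = false by move=> z; apply: disjointFl.
have noMY : forall m y, m \in M -> y \in Y -> eR m y -> False.
  by move=> m y mM yY my; apply: noMYw; exists m, [:: y]; rewrite /is_walk /= my.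
have noYM : forall m y, m \in M -> y \in Y -> eR y m -> False.
  by move=> m y mM yY my; apply: noYMw; exists y, [:: m]; rewrite /is_walk /= my.
have stepA : forall x, x \in X -> forall c d,
    (exists2 m, m \in M & eR x m && eR m c) -> S c d -> connect S d c ->
    (exists2 m, m \in M & eR x m && eR m d).
  move=> x xX c d [m mM /andP[xm mc]] /or3P[/andP[cd _]|/andP[cM /existsP[x' /and3P[x'X cx' /eqP->]]]|/andP[dM /existsP[x' /and3P[x'X x'd /eqP cE]]]] _.
  - by exists m => //; rewrite xm (Rtr c).
  - have := cvx x [:: c; x'] ; rewrite /is_walk /= (Rtr m) // cx' xX x'X.
    by move=> /(_ isT isT isT) /and3P[_ cX _]; rewrite nXM in cM.
  - by case: (noMY m c mM) => //; rewrite cE bY.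
have NoU : forall x d, x \in X -> d \in M -> eR x d -> connect S d (beta x) -> False.
  move=> x d xX dM xd con.
  have : exists2 m, m \in M & eR x m && eR m (beta x).
    apply: (@inv_cycle _ S (fun c => exists2 m, m \in M & eR x m && eR m c) (stepA x xX) d (beta x) _ con).
      by exists d => //; rewrite xd Rrefl.
    apply: connect1; apply/or3P; apply: Or33; rewrite dM /=.
    by apply/existsP; exists x; rewrite xX xd eqxx.
  by case=> m mM /andP[_ mb]; apply: (noMY m (beta x)) => //; apply: bY.
have CycR : forall c d, S c d -> connect S d c -> eR c d.
  move=> c d /or3P[/andP[cd _]|/andP[cM /existsP[x' /and3P[x'X cx' /eqP dE]]]|/andP[dM /existsP[x' /and3P[x'X x'd /eqP cE]]]] con //.
    have stepB : forall p q, (exists2 y, y \in Y & eR y p) -> S p q -> connect S q p ->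
        exists2 y, y \in Y & eR y q.
      move=> p q [y yY yp] /or3P[/andP[pq _]|/andP[pM _]|/andP[qM /existsP[x'' /and3P[x''X x''q /eqP pE]]]] con'.
      - by exists y => //; apply: Rtr pq.
      - by case: (noYM p y).
      - by case: (NoU x'' q) => //; rewrite -pE.
    have : exists2 y, y \in Y & eR y c.
      apply: (@inv_cycle _ S (fun c => exists2 y, y \in Y & eR y c) stepB d c _ con).
        by exists d; [rewrite dE bY | apply: Rrefl].
      by apply: connect1; apply/or3P; apply: Or32; rewrite cM /=; apply/existsP; exists x'; rewrite x'X cx' dE eqxx.
    by case=> y yY yc; case: (noYM c y).
  by case: (NoU x' d) => //; rewrite -cE.
have conn : forall a b, connect S a b -> connect S b a -> eR a b.
  move=> a b; apply: (@inv_cycle _ S (fun c => eR a c)) => //.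
  by move=> c d ac cd dc; apply: (Rtr c) => //; apply: CycR.
have Sref : forall a, S a a.
  move=> a; apply/or3P; apply: Or31; rewrite Rrefl /=.
  by case aM: (a \in M); case aX: (a \in X) => //=; rewrite nXM in aM.
split.
  split.
  - by move=> a; apply/existsP; exists a; rewrite Sref connect0.
  - move=> a b /andP[/existsP[z /andP[Saz czb]] /existsP[z' /andP[Sbz' cz'a]]].
    have ab : connect S a b by apply: connect_trans (connect1 Saz) czb.
    have ba : connect S b a by apply: connect_trans (connect1 Sbz') cz'a.
    by apply: Ranti; rewrite !conn.
  - move=> b a c /existsP[z /andP[Saz czb]] /existsP[z' /andP[Sbz' cz'c]].
    apply/existsP; exists z; rewrite Saz /=.
    by apply: connect_trans czb (connect_trans (connect1 Sbz') cz'c).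

move=> V eG _.
pose flag (xi : {ffun V -> Z}) v := (xi v \in X) &&
  [exists u, (u \in Gamma eG xi v) && [exists w, adjacent eG u w && (xi w \in M)]].
pose rho (xi : {ffun V -> Z}) := [ffun v => if flag xi v then beta (xi v) else xi v].
have rel_sym : forall (xi : {ffun V -> Z}) v,
  symmetric [rel a b | [&& a \in [set u | xi u == xi v], b \in [set u | xi u == xi v] & adjacent eG a b]].
  by move=> xi v a b /=; rewrite /adjacent andbCA orbC.
have inG : forall (xi : {ffun V -> Z}) v w, w \in Gamma eG xi v -> xi w = xi v.
  move=> xi v w; rewrite inE => /connectP [p pth ->].
  have : forall a, xi a = xi v ->
    path [rel a b | [&& a \in [set u | xi u == xi v], b \in [set u | xi u == xi v] & adjacent eG a b]] a p ->
    xi (last a p) = xi v.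
    elim: p {pth} => //= q p IH a _ /andP[/and3P[_ ]].
    by rewrite inE => /eqP qv _; apply: IH.
  by apply.
have Gtr : forall (xi : {ffun V -> Z}) v w, w \in Gamma eG xi v -> Gamma eG xi w = Gamma eG xi v.
  move=> xi v w wv; have wvE := inG _ _ _ wv.
  rewrite /Gamma /gamma wvE; move: wv; rewrite inE => wv.
  apply/setP => u; rewrite !inE; apply/idP/idP => h.
    by apply: connect_trans wv h.
  by apply: connect_trans h; rewrite (sym_connect_sym (rel_sym xi v)).
have adjG : forall (xi : {ffun V -> Z}) v w, adjacent eG v w -> xi v = xi w -> w \in Gamma eG xi v.
  move=> xi v w vw e; rewrite inE; apply: connect1.
  by rewrite /= !inE eqxx e eqxx vw.
have flagB : forall (xi : {ffun V -> Z}) v w, w \in Gamma eG xi v -> flag xi w = flag xi v.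
  by move=> xi v w wv; rewrite /flag (inG _ _ _ wv) (Gtr _ _ _ wv).
have flag_intro : forall (xi : {ffun V -> Z}) v w, xi v \in X -> adjacent eG v w -> xi w \in M -> flag xi v.
  move=> xi v w vX vw wM; rewrite /flag vX /=; apply/existsP; exists v.
  rewrite inE connect0 /=; apply/existsP; exists w; by rewrite vw wM.
have rhoE : forall xi v, rho xi v = if flag xi v then beta (xi v) else xi v.
  by move=> xi v; rewrite ffunE.
have nbeta : forall x z, x \in X -> z \in M = false -> z != x -> eR x z || eR z x -> z != beta x.
  move=> x z xX zM zx /orP[xz|zx'].
    have : z \in Nout eR x :\: M by rewrite !inE zM zx xz.
    by move/(subsetP (hNout x xX)); rewrite inE => /andP[].
  have : z \in Nin eR x :\: M by rewrite !inE zM zx zx'.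
  by move/(subsetP (hNin x xX)); rewrite inE => /andP[].
have EQ : forall xi : {ffun V -> Z}, is_hom eG eR xi ->
    forall a b, adjacent eG a b -> (rho xi a == rho xi b) = (xi a == xi b).
  move=> xi hxi a b ab; rewrite !rhoE.
  case: (xi a =P xi b) => [e|ne].
    by rewrite (flagB xi a b (adjG _ _ _ ab e)) e; case: (flag xi a); rewrite eqxx.
  have rab : eR (xi a) (xi b) || eR (xi b) (xi a).
    by case/orP: ab => h; rewrite (hxi _ _ h) ?orbT.
  case fa: (flag xi a); case fb: (flag xi b).
  - apply/negP => /eqP e; apply: ne; apply: binj => //; by move: fa fb => /andP[] + _ /andP[] + _.
  - move: fa => /andP[aX _]; apply/negbTE; rewrite eq_sym.
    case bM: (xi b \in M).
      by apply/eqP => e; move: bM; rewrite e nYM // bY.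
    by apply: nbeta => //; rewrite eq_sym; apply/eqP.
  - move: fb => /andP[bX _]; apply/negbTE.
    case aM: (xi a \in M).
      by apply/eqP => e; move: aM; rewrite e nYM // bY.
    by apply: nbeta => //; [apply/eqP | rewrite orbC].
  - by apply/eqP.
have Gpres : forall xi : {ffun V -> Z}, is_hom eG eR xi -> forall v,
    Gamma eG (rho xi) v = Gamma eG xi v.
  by move=> xi hxi v; rewrite /Gamma; apply: gamma_eq; apply: EQ.
have ST : forall a b, S a b -> trans_hull S a b.
  by move=> a b ab; apply/existsP; exists b; rewrite ab connect0.
exists rho; split.
- move=> xi hxi v w vw; apply: ST; rewrite !rhoE.
  have ab := hxi v w vw.
  have adj : adjacent eG v w by rewrite /adjacent vw.
  have adj' : adjacent eG w v by rewrite /adjacent vw orbT.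
  case fv: (flag xi v); case fw: (flag xi w).
  - move: fv fw => /andP[aX _] /andP[bX _].
    by apply/or3P; apply: Or31; rewrite bhom //= !nYM ?bY // andbF.
  - move: (fv) => /andP[aX _].
    case bM: (xi w \in M).
      apply/or3P; apply: Or33; rewrite bM /=; apply/existsP; exists (xi v).
      by rewrite aX ab eqxx.
    have ne : xi w != xi v.
      apply/eqP => e; move: fw; rewrite (flagB xi v w (adjG _ _ _ adj (esym e))).
      by rewrite fv.
    have : xi w \in Nout eR (xi v) :\: M by rewrite !inE bM ne ab.
    move/(subsetP (hNout _ aX)); rewrite inE => /andP[_ bb].
    by apply/or3P; apply: Or31; rewrite bb /= bM nYM ?bY //= andbF.
  - move: (fw) => /andP[bX _].
    case aM: (xi v \in M).
      apply/or3P; apply: Or32; rewrite aM /=; apply/existsP; exists (xi w).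
      by rewrite bX ab eqxx.
    have ne : xi v != xi w.
      apply/eqP => e; move: fv; rewrite -(flagB xi v w (adjG _ _ _ adj e)).
      by rewrite fw.
    have : xi v \in Nin eR (xi w) :\: M by rewrite !inE aM ne ab.
    move/(subsetP (hNin _ bX)); rewrite inE => /andP[_ bb].
    by apply/or3P; apply: Or31; rewrite bb /= aM nYM ?bY //= andbF.
  - apply/or3P; apply: Or31; rewrite ab /=.
    case aM: (xi v \in M); case bX: (xi w \in X) => //=;
      try (by move: fw; rewrite (flag_intro xi w v bX adj' aM));
      case aX: (xi v \in X) => //=; case bM: (xi w \in M) => //;
      by move: fv; rewrite (flag_intro xi v w aX adj bM).
- have MeqE : forall (xi : {ffun V -> Z}) w, (rho xi w \in M) = (xi w \in M).
    move=> xi w; rewrite rhoE; case fw: (flag xi w) => //.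
    by move: fw => /andP[wX _]; rewrite (nXM (xi w)) // nYM // bY.
  have flagE : forall xi : {ffun V -> Z}, is_hom eG eR xi -> forall v,
      flag xi v = (rho xi v \in Y) &&
        [exists u, (u \in Gamma eG (rho xi) v) && [exists w, adjacent eG u w && (rho xi w \in M)]].
    move=> xi hxi v; rewrite Gpres //.
    have -> : [exists u, (u \in Gamma eG xi v) && [exists w, adjacent eG u w && (rho xi w \in M)]] =
      [exists u, (u \in Gamma eG xi v) && [exists w, adjacent eG u w && (xi w \in M)]].
      apply: eq_existsb => u; congr (_ && _); apply: eq_existsb => w; by rewrite MeqE.
    rewrite rhoE; case fv: (flag xi v).
      by move: fv => /andP[vX ->]; rewrite bY.
    apply/esym/negbTE/negP => /andP[vY /existsP[u /andP[uG /existsP[w /andP[uw wM]]]]].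
    have uv := inG _ _ _ uG.
    case/orP: uw => h; have := hxi _ _ h; rewrite uv => r.
      by apply: (noYM (xi w) (xi v)).
    by apply: (noMY (xi w) (xi v)).
  move=> xi1 xi2 h1 h2 e; apply/ffunP => v.
  have f12 : flag xi1 v = flag xi2 v by rewrite flagE // flagE // e.
  have := congr1 (fun f : {ffun V -> Z} => f v) e; rewrite /= !rhoE f12.
  case f2: (flag xi2 v) => //.
  move: f12; rewrite f2 => /andP[v1 _]; move: f2 => /andP[v2 _]; exact: binj.
- by move=> xi v hxi; apply: Gpres.
Qed.
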